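(* Let $\mathbf{MB}$ be the modification of a Standard Bloom filter in which each hash function $h_i$ ($i\in[k]$) is replaced by a truly random function $f_i : U \to [m]$. Let $\varepsilon\in(0,1)$ and $n\in\mathbb{N}$. Then $\mathbf{MB}$ is not $(n,t,\delta)$-resilient under the BP test for any $t\in\mathbb{N}$ and any $\delta\in(0,1)$ with $\delta<p_s$, where $p_s$ is the saturation probability of $\mathbf{MB}$.
   Context: A Standard Bloom filter with parameters $m,k$ stores a set $S\subseteq U$ (a finite universe of size $u$) as a bit string $M\in\{0,1\}^m$, initially all zeros, by setting bit $h_i(x)$ to $1$ for every $x\in S$ and $i\in[k]$, where $h_i:U\to[m]$; a query on $x$ returns $1$ iff all bits $h_i(x)$, $i\in[k]$, equal $1$. In $\mathbf{MB}$ the $h_i$ are truly random functions $f_i$. The saturation probability $p_s$ is the probability that, after encoding a set of size $n$, every bit of $M$ equals $1$. An element $x\notin S$ with query answer $1$ is a false positive. BP test with parameter $\delta$ (for an $(n,\delta)$-Bloom filter $\mathbf{B}=(\mathbf{B}_1,\mathbf{B}_2)$, security parameter $\lambda$): an adversary $\mathcal{A}=(\mathcal{A}_1,\mathcal{A}_2)$ plays: $\mathcal{A}_1(1^{\lambda+n\log u})$ outputs $S\subseteq U$ with $|S|=n$; $M\gets\mathbf{B}_1(1^{\lambda+n\log u},S)$; $\mathcal{A}_2(1^{\lambda+n\log u},S)$ makes at most $t$ adaptive queries $x_1,\dots,x_t$ to $\mathbf{B}_2(M,\cdot)$ and then outputs $(b,x^* )$ with $b\in\{0,1\}$ and $x^*\notin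 S\cup\{x_1,\dots,x_t\}$. The profit $C_{\mathcal{A}}$ is $1/\delta$ if $b=1$ and $x^*$ is a false positive, $-1/(1-\delta)$ if $b=1$ and $x^*$ is not a false positive, and $0$ if $b=0$. $\mathbf{B}$ is $(n,t,\delta)$-resilient under the BP test if for every adversary there is a negligible function $\mathrm{negl}$ with $\mathbb{E}[C_{\mathcal{A}}]\le\mathrm{negl}(\lambda)$, the expectation over the randomness of $\mathbf{B}$ and $\mathcal{A}$. *)

(* Defs.v *)
From HB Require Import structures.
From mathcomp Require Import all_boot all_order all_algebra.
Unset Printing Implicit Defensive.
Import Order.TTheory GRing.Theory Num.Theory.
Local Open Scope ring_scope.

Section BloomDefs.
Variables (R : realFieldType) (U : finType) (m k : nat).

(* The random choice of MB: k truly random functions f_i : U -> [m]. *)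
Definition hashes := {ffun 'I_k -> {ffun U -> 'I_m}}.

Definition encode (f : hashes) (S : {set U}) : {ffun 'I_m -> bool} :=
  [ffun j => [exists i : 'I_k, exists x in S, f i x == j]].

Definition query (f : hashes) (M : {ffun 'I_m -> bool}) (x : U) : bool :=
  [forall i : 'I_k, M (f i x)].

Definition prob_hashes (P : pred hashes) : R :=
  (\sum_(f : hashes | P f) 1) / #|{: hashes}|%:R.

Definition canon_set (n : nat) : {set U} := [set x in take n (enum U)].

(* saturation probability p_s: after encoding a set of size n, all bits are 1
   (for truly random functions this does not depend on the chosen set) *)
Definition sat_prob (n : nat) : R :=
  prob_hashes (fun f => [forall j : 'I_m, encode f (canon_set n) j]).

(* A (possibly randomized, computationally unbounded) adversary, as a family
   indexed by the security parameter lambda.  A1 and A2 use independent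
   random coins drawn from finite distributions p1, p2.  A2 is adaptive: given
   the history of (query, answer) pairs it either asks a new query (Some x)
   or stops (None); its final output (b, x* ) is a function of the history. *)
Record adversary := Adversary {
  C1 : nat -> finType;
  p1 : forall l, {ffun C1 l -> R};
  A1 : forall l, C1 l -> {set U};
  C2 : nat -> finType;
  p2 : forall l, {ffun C2 l -> R};
  A2q : forall l, {set U} -> C2 l -> seq (U * bool) -> option U;
  A2o : forall l, {set U} -> C2 l -> seq (U * bool) -> bool * U
}.

Arguments p1 : clear implicits.
Arguments A1 : clear implicits.
Arguments p2 : clear implicits.
Arguments A2q : clear implicits.
Arguments A2o : clear implicits.

Definition is_distr {T : finType} (p : {ffun T -> R}) : Prop :=
  (forall c, 0 <= p c) /\ \sum_c p c = 1.

Definition valid_adversary (n : nat) (A : adversary) : Prop :=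
  forall l, is_distr (p1 A l) /\ is_distr (p2 A l) /\
            (forall c, #|A1 A l c| = n).

Fixpoint run_queries (q : seq (U * bool) -> option U)
    (ans : U -> bool) (fuel : nat) (h : seq (U * bool)) : seq (U * bool) :=
  match fuel with
  | 0 => h
  | fuel'.+1 =>
      match q h with
      | None => h
      | Some x => run_queries q ans fuel' (rcons h (x, ans x))
      end
  end.

(* profit C_A of one run; an output x* in S or among the queries is not a
   legal output and is counted as abstaining (profit 0) *)
Definition profit (delta : R) (t : nat) (A : adversary) (l : nat)
    (f : hashes) (c1 : C1 A l) (c2 : C2 A l) : R :=
  let S := A1 A l c1 in
  let M := encode f S in
  let h := run_queries (A2q A l S c2) (query f M) t [::] in
  let (b, xs) := A2o A l S c2 h in
  if b && (xs \notin S) && (xs \notin map fst h) then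
    (if query f M xs then delta^-1 else - (1 - delta)^-1)
  else 0.

Definition exp_profit (delta : R) (t : nat) (A : adversary) (l : nat) : R :=
  \sum_(f : hashes) \sum_(c1 : C1 A l) \sum_(c2 : C2 A l)
     (#|{: hashes}|%:R)^-1 * p1 A l c1 * p2 A l c2 * profit delta t A l f c1 c2.

Definition negligible (g : nat -> R) : Prop :=
  forall c : nat, exists N : nat, forall l : nat, (N <= l)%N ->
    `|g l| <= ((l%:R) ^+ c)^-1.

Definition BP_resilient (n t : nat) (delta : R) : Prop :=
  forall A : adversary, valid_adversary n A ->
    exists g : nat -> R, negligible g /\
      forall l : nat, exp_profit delta t A l <= g l.

End BloomDefs.

(* Main.v *)
Require Import Defs.
From HB Require Import structures.
From mathcomp Require Import all_boot all_order all_algebra.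
From mathcomp Require Import ring lra zify.
Import Order.TTheory GRing.Theory Num.Theory.
Local Open Scope ring_scope.

Lemma sum_unit (R : realFieldType) (F : Finite.clone unit _ -> R) : \sum_(c : Finite.clone unit _) F c = F tt.
Proof. by rewrite (big_pred1 tt) // => -[]. Qed.

Lemma canon_card (U : finType) n : (n <= #|U|)%N -> #|canon_set U n| = n.
Proof.
move=> hn; rewrite /canon_set cardsE.
rewrite (card_uniqP _).
  by rewrite size_takel // -cardE.
by rewrite take_uniq // enum_uniq.
Qed.

Lemma run_none (U : finType) ans t : run_queries U (fun _ => None) ans t [::] = [::].
Proof. by case: t. Qed.

Theorem mainTheorem5 (R : realFieldType) (U : finType) (m k n : nat)
    (eps : R) (heps : 0 < eps < 1) (hm : (0 < m)%N) (hn : (n < #|U|)%N) :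
  forall (t : nat) (delta : R), 0 < delta < 1 ->
    delta < sat_prob R U m k n ->
    ~ BP_resilient R U m k n t delta.
Proof.
move=> t delta /andP[d0 d1] hsat.
set S := canon_set U n.
have cS : #|S| = n by apply: canon_card; exact: ltnW.
have [xs xsS] : exists xs, xs \notin S.
  case: (pickP [pred x | x \notin S]) => [x Hx|H]; first by exists x.
  have : U \subset S by apply/subsetP => x _; move: (H x) => /= /negbFE.
  by move/subset_leq_card; rewrite cS leqNgt hn.
set Q := fun f : hashes U m k => query U m k f (encode U m k f S) xs.
set Sat := fun f : hashes U m k => [forall j : 'I_m, encode U m k f S j].
set N := #|{: hashes U m k}|.
set fc : hashes U m k := [ffun i => [ffun x => Ordinal hm]].
have NR : N%:R = \sum_(f : hashes U m k) (1 : R) by rewrite sumr_const.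
have N0 : (0 < N)%N by apply/card_gt0P; exists fc.
have N0R : 0 < N%:R :> R by rewrite ltr0n.
have satE : sat_prob R U m k n = (\sum_f ((Sat f)%:R : R)) / N%:R.
  rewrite /sat_prob /prob_hashes big_mkcond /=; congr (_ / _).
  by apply: eq_bigr => f _; rewrite -/S -/(Sat f); case: (Sat f).
have SatQ : forall f, Sat f -> Q f.
  by move=> f /forallP H; apply/forallP => i; apply: H.
have [f0 Hf0] : exists f0, Sat f0.
  case: (pickP Sat) => [x Hx|H]; first by exists x.
  move: hsat; rewrite satE big1 ?mul0r; first by rewrite ltNge (ltW d0).
  by move=> f _; rewrite H.
have [i0 [s0 s0S _]] : exists i0 : 'I_k, exists2 s0, s0 \in S & true.
  move/forallP: Hf0 => /(_ (Ordinal hm)); rewrite ffunE => /existsP[i0 /existsP[s0 /andP[Hs _]]].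
  by exists i0, s0.
set A := Adversary R U (fun _ => Finite.clone unit _) (fun l => [ffun _ => 1])
  (fun l _ => S) (fun _ => Finite.clone unit _) (fun l => [ffun _ => 1])
  (fun l _ _ _ => None) (fun l _ _ _ => (true, xs)).
have vA : valid_adversary R U n A.
  move=> l; split; [|split] => //=.
  - by split=> [c|]; rewrite ?ffunE // sum_unit ffunE.
  - by split=> [c|]; rewrite ?ffunE // sum_unit ffunE.
set d := delta * (1 - delta).
have dpos : 0 < d by rewrite /d mulr_gt0 // subr_gt0.
have dlt1 : d < 1 by rewrite /d; nra.
have PF : forall f, (if Q f then delta^-1 else -(1-delta)^-1) = ((Q f)%:R - delta) / d.
  have h1 : delta != 0 by rewrite gt_eqF.
  have h2 : 1 - delta != 0 by rewrite subr_eq0 gt_eqF.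
  move=> f; rewrite /d; case: (Q f) => /=; field; by rewrite h1 h2.
have EP : forall l, exp_profit R U m k delta t A l =
   (\sum_f (((Q f)%:R : R) - delta)) / (N%:R * d).
  move=> l; rewrite /exp_profit /=.
  rewrite invfM mulrC -mulrA mulr_sumr mulr_sumr; apply: eq_bigr => f _.
  rewrite !sum_unit !ffunE !mulr1 /profit /= run_none /= xsS /=.
  rewrite -/(Q f) PF; congr (_ * _); exact: mulrC.
have EL : 1 < (\sum_f (((Q f)%:R : R) - delta)) / d.
  rewrite big_split /= sumr_const -/N -mulr_natr.
  have [m1|m2] := leqP m 1.
  - have allQ : forall f, Q f.
      move=> f; apply/forallP => i; rewrite ffunE; apply/existsP; exists i0.
      apply/existsP; exists s0; rewrite s0S /=; apply/eqP/val_inj => /=.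
      by case: (f i0 s0) => a /= ha; case: (f i xs) => b /= hb; lia.
    rewrite (eq_bigr (fun _ => 1)); last by move=> f _; rewrite allQ.
    rewrite -NR lter_pdivlMr // mul1r /d.
    have h1 : 1 <= N%:R :> R by rewrite ler1n.
    have h2 : 0 < (1 - delta) * (N%:R - delta) by rewrite mulr_gt0 // subr_gt0 //; lra.
    nra.
  - have Qfc : Q fc.
      apply/forallP => i; rewrite !ffunE; apply/existsP; exists i0.
      by apply/existsP; exists s0; rewrite s0S /= !ffunE.
    have nSfc : ~~ Sat fc.
      apply/negP => /forallP /(_ (Ordinal m2)); rewrite ffunE.
      by move=> /existsP[i /existsP[x /andP[_]]]; rewrite ffunE ffunE.
    have ge : (\sum_f ((Sat f)%:R : R)) + 1 <= \sum_f ((Q f)%:R : R).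
      rewrite (bigD1 fc) //= [X in _ <= X](bigD1 fc) //= (negbTE nSfc) Qfc add0r.
      rewrite (_ : true%:R = 1) // addrC; apply: lerD => //; apply: ler_sum => f _.
      by case: (Sat f) (SatQ f) => //= /(_ isT) ->.
    have hs : delta * N%:R < \sum_f ((Sat f)%:R : R).
      by move: hsat; rewrite satE lter_pdivlMr.
    rewrite lter_pdivlMr // mul1r mulNr; lra.
move=> /(_ A vA) [g [negl Hg]].
have [N1 HN1] := negl 1%N.
set L := (N1 + N)%N.
have := HN1 L (leq_addr _ _); rewrite expr1 => Hgl.
have H1 : exp_profit R U m k delta t A L <= L%:R^-1.
  by apply: le_trans (Hg L) _; apply: le_trans (ler_norm _) Hgl.
move: H1; rewrite EP.
set E := (\sum_f (((Q f)%:R : R) - delta)).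
have LN : N%:R <= L%:R :> R by rewrite ler_nat leq_addl.
have L0 : 0 < L%:R :> R by apply: lt_le_trans LN.
move=> H2.
have dn : d != 0 by rewrite gt_eqF.
have Nn : N%:R != 0 :> R by rewrite gt_eqF.
have e1 : E / (N%:R * d) = (E / d) / N%:R by field; rewrite Nn dn.
have e2 : L%:R^-1 <= N%:R^-1 :> R by rewrite lef_pV2 ?posrE.
have e3 : N%:R^-1 < (E / d) / N%:R.
  by rewrite -{1}(mul1r N%:R^-1) ltr_pM2r ?invr_gt0.
rewrite e1 in H2; lra.
Qed.
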